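(* For every integer $n \geq 1$, $$P_O(n) - P_E(n) = \sum_{i \geq 1} S(i)\, p(n-i).$$
   Context: $p(m)$ is the number of partitions of $m$, with $p(0)=1$ and $p(m)=0$ for $m<0$. $P_O(n)$ (resp. $P_E(n)$) denotes the number of partitions of $n$ whose smallest part is odd (resp. even). The rank of a partition is its largest part minus its number of parts. For $i \geq 1$, $S(i)$ is the number of partitions of $i$ into distinct parts with even rank minus the number of partitions of $i$ into distinct parts with odd rank. *)

(* Defs.v *)
From mathcomp Require Import all_boot all_order all_algebra.
Set Implicit Arguments. Unset Strict Implicit. Unset Printing Implicit Defensive.
Import GRing.Theory Num.Theory.

Definition is_partition (n : nat) (s : seq nat) : bool :=
  [&& sorted geq s, all (fun x => 0 < x) s & sumn s == n].

Fixpoint seqs_len (n k : nat) : seq (seq nat) :=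
  if k is k'.+1 then
    flatten [seq [seq x :: t | t <- seqs_len n k'] | x <- iota 1 n]
  else [:: [::]].

(* candidate sequences: length <= n, entries in {1..n} (every partition
   of n is among them) *)
Definition candidates (n : nat) : seq (seq nat) :=
  flatten [seq seqs_len n k | k <- iota 0 n.+1].

Definition partitions (n : nat) : seq (seq nat) :=
  [seq s <- undup (candidates n) | is_partition n s].


Definition pnum (m : int) : int :=
  match m with
  | Posz k => (size (partitions k))%:Z
  | Negz _ => 0
  end.

Definition largest_part (s : seq nat) : nat := foldr maxn 0 s.
Definition smallest_part (s : seq nat) : nat := foldr minn (head 0 s) s.
Definition num_parts (s : seq nat) : nat := size s.

Definition rank (s : seq nat) : int := (largest_part s)%:Z - (num_parts s)%:Z.

Definition P_O (n : nat) : nat :=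
  count (fun s => odd (smallest_part s)) (partitions n).
Definition P_E (n : nat) : nat :=
  count (fun s => ~~ odd (smallest_part s)) (partitions n).

Definition Sd (i : nat) : int :=
  (count (fun s => uniq s && ~~ odd `|rank s|%N) (partitions i))%:Z
  - (count (fun s => uniq s && odd `|rank s|%N) (partitions i))%:Z.

(* Main.v *)
Require Import Defs.
From mathcomp Require Import all_boot all_order all_algebra zify ring.
Import GRing.Theory Num.Theory.
Set Implicit Arguments. Unset Strict Implicit. Unset Printing Implicit Defensive.

Lemma mem_sumn (s : seq nat) x : x \in s -> (x <= sumn s)%N.
Proof.
elim: s => //= y s IH; rewrite inE => /orP [/eqP -> | /IH H]; first exact: leq_addr.
exact: leq_trans H (leq_addl _ _).
Qed.

Lemma size_sumn (s : seq nat) : all (fun x => 0 < x)%N s -> (size s <= sumn s)%N.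
Proof.
elim: s => //= y s IH /andP [Hy /IH H]; rewrite -add1n; exact: leq_add.
Qed.

Lemma mem_seqs_len n k s : size s = k -> all (fun x => 0 < x <= n)%N s ->
  s \in seqs_len n k.
Proof.
elim: s k => [|x s IH] [|k] //=;
move=> [Hk] /andP [Hx Hs]; apply/flatten_mapP; exists x.
  by rewrite mem_iota add1n.
by apply: map_f; apply: IH.
Qed.

Lemma mem_partitions n s : (s \in partitions n) = is_partition n s.
Proof.
rewrite /partitions mem_filter mem_undup andb_idr // => /and3P [_ Hp /eqP Hs].
apply/flatten_mapP; exists (size s).
  by rewrite mem_iota add0n ltnS -Hs size_sumn.
apply: mem_seqs_len => //; apply/allP => x Hx; rewrite (allP Hp) //=.
by rewrite -Hs mem_sumn.
Qed.

Lemma uniq_partitions n : uniq (partitions n).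
Proof. by rewrite filter_uniq // undup_uniq. Qed.

Lemma geq_trans' : transitive geq.
Proof. by move=> a b c /= H1 H2; apply: leq_trans H2 H1. Qed.
Lemma gtn_trans' : transitive gtn.
Proof. by move=> a b c /= H1 H2; apply: ltn_trans H2 H1. Qed.

Lemma sorted_rcons_geq (s : seq nat) x :
  sorted geq (rcons s x) = sorted geq s && all (fun y => x <= y) s.
Proof.
rewrite -rev_sorted rev_rcons /= path_sortedE; last first.
  by move=> a b c /= H1 H2; apply: leq_trans H1 H2.
rewrite all_rev rev_sorted andbC; congr (_ && _).
Qed.

Definition allge m (s : seq nat) := all (fun x => m <= x) s.

Lemma count_X m k : 0 < m ->
  count (fun s => allge m s && ~~ allge m.+1 s) (partitions k) =
  if m <= k then count (allge m) (partitions (k - m)) else 0.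
Proof.
move=> m0; case: ifP => Hmk; last first.
  apply/eqP; rewrite -leqn0 leqNgt -has_count; apply/hasPn => s.
  rewrite mem_partitions => /and3P [_ _ /eqP Hs].
  apply/negP => /andP [H1 /allPn [y Hy]]; rewrite -ltnNge ltnS => Hym.
  have : m <= k by rewrite -Hs (leq_trans _ (mem_sumn Hy)) // (allP H1).
  by rewrite Hmk.
rewrite -!size_filter -[RHS](size_map (rcons^~ m)); apply/perm_size; apply: uniq_perm.
- by apply: filter_uniq; apply: uniq_partitions.
- rewrite map_inj_uniq; first by apply: filter_uniq; apply: uniq_partitions.
  by move=> a b /eqP; rewrite eqseq_rcons eqxx andbT => /eqP.
move=> t; rewrite mem_filter mem_partitions; apply/idP/idP.
- move=> /andP [/andP [H1 /allPn [y Hy]]]; rewrite -ltnNge ltnS => Hym.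
  case/lastP: t H1 Hy => [//|s x] H1 Hy /and3P [Hsort Hpos /eqP Hsum].
  move: Hsort; rewrite sorted_rcons_geq => /andP [Hs Hxs].
  have Hx : x = m.
    apply/eqP; rewrite eqn_leq; apply/andP; split; last first.
      by move: H1; rewrite /allge all_rcons => /andP [].
    move: Hy; rewrite mem_rcons inE => /orP [/eqP <- //| Hys].
    exact: leq_trans (allP Hxs _ Hys) Hym.
  subst x; apply/mapP; exists s => //.
  rewrite mem_filter mem_partitions /is_partition Hs.
  move: Hpos H1; rewrite /allge !all_rcons => /andP [_ ->] /andP [_ ->] /=.
  by rewrite -Hsum sumn_rcons addnK.
- move=> /mapP [s]; rewrite mem_filter mem_partitions => /andP [H1].
  move=> /and3P [Hsort Hpos /eqP Hsum] ->.
  move: H1; rewrite /allge => H1.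
  rewrite /is_partition sorted_rcons_geq Hsort H1 !all_rcons leqnn H1 m0 Hpos.
  by rewrite sumn_rcons Hsum subnK //= ltnn eqxx.
Qed.
Local Open Scope ring_scope.

Fixpoint subs (k : nat) : seq (seq nat) :=
  if k is k'.+1 then subs k' ++ map (cons k) (subs k') else [:: [::]].

Lemma mem_subs k t :
  (t \in subs k) = sorted gtn t && all (fun x => 0 < x <= k)%N t.
Proof.
elim: k t => [|k IH] t.
  case: t => [|x t] //=; rewrite inE /=; case: x => [|x] /=; by rewrite !andbF.
rewrite /= mem_cat IH; apply/idP/idP.
- case/orP => [/andP [-> H] | /mapP [T]]; rewrite ?andTb.
    by apply/allP => x /(allP H) /andP [H1 H2]; rewrite /= H1 (leqW H2).
  rewrite IH => /andP [Hs Ha] ->; rewrite /= path_sortedE; last exact: gtn_trans'.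
  rewrite Hs ltnSn andbT /=; apply/andP; split; apply/allP => x /(allP Ha) /andP [H1 H2] /=.
    by rewrite ltnS.
  by rewrite H1 (leqW H2).
- case: t => [|x t] //=; move=> /andP [Hp /andP [/andP [x0 Hx] Ha]].
  move: Hp; rewrite path_sortedE; last exact: gtn_trans'.
  move=> /andP [Hxt Hst].
  move: Hx; rewrite leq_eqVlt => /orP [/eqP Ex | Hx].
    apply/orP; right; apply/mapP; exists t => //; last by rewrite Ex.
    rewrite IH Hst; apply/allP => y Hy; move: (allP Hxt _ Hy) (allP Ha _ Hy).
    by rewrite /= Ex ltnS => H /andP [-> _].
  apply/orP; left.
  rewrite Hxt Hst x0 -ltnS Hx /=; apply/allP => y Hy; move: (allP Hxt _ Hy) (allP Ha _ Hy).
  move=> /= H /andP [-> _] /=; apply: leq_trans (ltnW H) _; by rewrite -ltnS.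
Qed.

Lemma uniq_subs k : uniq (subs k).
Proof.
elim: k => //= k IH; rewrite cat_uniq IH map_inj_uniq //=; last by move=> a b [].
rewrite IH andbT; apply/hasPn => t /mapP [T _ ->]; rewrite mem_subs /=.
by rewrite ltnn andbF.
Qed.

Definition g (m : nat) (N : int) : int :=
  match N with Posz k => (count (allge m) (partitions k))%:Z | Negz _ => 0 end.

Lemma g_neg m N : N < 0 -> g m N = 0.
Proof. by case: N. Qed.

Lemma pnum_neg N : N < 0 -> pnum N = 0.
Proof. by case: N. Qed.

Lemma count_split T (a b : pred T) l :
  count a l = (count (fun x => a x && b x) l + count (fun x => a x && ~~ b x) l)%N.
Proof.
elim: l => //= x l ->; case: (a x) => /=; case: (b x) => /=; rewrite ?add0n ?addn0 //.
by rewrite addnCA.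
Qed.

Lemma g_rec m N : (0 < m)%N -> g m N = g m.+1 N + g m (N - m%:Z).
Proof.
move=> m0; case: N => [k|k]; last by rewrite !g_neg ?addr0 // ?NegzE; lia.
rewrite /= (count_split _ (allge m.+1)) count_X // PoszD.
have -> : count (fun s => allge m s && allge m.+1 s) (partitions k) =
          count (allge m.+1) (partitions k).
  apply: eq_count => s; apply: andb_idl => /allP H; apply/allP => x /H.
  exact: ltnW.
case: ifP => Hmk; first by rewrite subzn.
by rewrite g_neg // subr_lt0 ltz_nat ltnNge Hmk.
Qed.

Definition F (k : nat) (N : int) : int :=
  \sum_(T <- subs k) (-1) ^+ size T * pnum (N - (sumn T)%:Z).

Lemma F_rec k N : F k.+1 N = F k N - F k (N - k.+1%:Z).
Proof.
rewrite /F /= big_cat big_map /=; congr (_ + _).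
rewrite -sumrN; apply: eq_bigr => T _.
by rewrite exprS mulN1r mulNr PoszD opprD addrA.
Qed.

Lemma F_g k N : F k N = g k.+1 N.
Proof.
elim: k N => [|k IH] N.
  rewrite /F /= big_cons big_nil addr0 expr0 mul1r subr0.
  case: N => [n|n] //=; congr Posz.
  rewrite -count_predT; apply: eq_in_count => s.
  by rewrite mem_partitions => /and3P [].
by rewrite F_rec !IH (@g_rec k.+1 N) // addrK.
Qed.

Lemma sum_ind (f : nat -> int) k a b :
  \sum_(a <= i < b) (if k == i then f i else 0) = if (a <= k < b)%N then f k else 0.
Proof.
case H: (a <= k < b)%N.
  rewrite (bigD1_seq k) ?mem_index_iota //=; last by rewrite /index_iota iota_uniq.
  rewrite eqxx big1 ?addr0 // => i; rewrite eq_sym => /negbTE ->; done.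
rewrite big_seq big1 // => i; rewrite mem_index_iota => Hi.
by case: eqP => // E; subst; rewrite Hi in H.
Qed.

Lemma sum_if T (l : seq T) (P : pred T) (c : int) :
  \sum_(s <- l) (if P s then c else 0) = c * (count P l)%:Z.
Proof.
elim: l => [|x l IH]; first by rewrite big_nil mulr0.
by rewrite big_cons IH /=; case: (P x); rewrite ?add0n ?add0r // PoszD mulrDr mulr1.
Qed.

Lemma count_sign T (l : seq T) (h : T -> nat) :
  (count (fun s => odd (h s)) l)%:Z - (count (fun s => ~~ odd (h s)) l)%:Z =
  \sum_(s <- l) (-1) ^+ (h s).+1.
Proof.
elim: l => [|x l IH]; first by rewrite big_nil.
rewrite big_cons -IH /= -signr_odd /=; case: (odd (h x)) => /=;
  rewrite ?add0n ?expr0 ?expr1 PoszD; ring.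
Qed.

Lemma count_sign2 T (l : seq T) (a : pred T) (h : T -> nat) :
  (count (fun s => a s && ~~ odd (h s)) l)%:Z - (count (fun s => a s && odd (h s)) l)%:Z =
  \sum_(s <- l | a s) (-1) ^+ (h s).
Proof.
elim: l => [|x l IH]; first by rewrite big_nil.
rewrite big_cons -IH /=; case: (a x) => /=; last by rewrite !add0n.
rewrite -signr_odd; case: (odd (h x)) => /=;
  rewrite ?add0n ?expr0 ?expr1 PoszD; ring.
Qed.

Lemma foldr_min_ge m x (s : seq nat) :
  (m <= foldr minn x s)%N = (m <= x)%N && allge m s.
Proof.
elim: s => [|y s IH] /=; first by rewrite andbT.
by rewrite leq_min IH /allge /= andbCA.
Qed.

Lemma sp_ge m s : s != [::] -> (m <= smallest_part s)%N = allge m s.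
Proof.
case: s => [//|y s] _; rewrite /smallest_part foldr_min_ge /= /allge /=.
by rewrite andbA andbb.
Qed.

Lemma LHS_eq n N : (1 <= n)%N -> (n < N)%N ->
  (P_O n)%:Z - (P_E n)%:Z = \sum_(j < N) (-1) ^+ j * g j.+1 (n%:Z - j.+1%:Z).
Proof.
move=> n1 nN; rewrite /P_O /P_E count_sign.
have E : forall s, s \in partitions n ->
    (-1) ^+ (smallest_part s).+1 =
    \sum_(j < N) (if smallest_part s == j.+1 then (-1) ^+ j else 0 : int).
  move=> s; rewrite mem_partitions => /and3P [_ Hp /eqP Hs].
  have sn : s != [::] by apply/eqP => E; rewrite E /= in Hs; rewrite -Hs in n1.
  have H1 : (1 <= smallest_part s)%N by rewrite sp_ge.
  have H2 : (smallest_part s <= n)%N.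
    move: (leqnn (smallest_part s)); rewrite {2}/smallest_part foldr_min_ge.
    move=> /andP [Hh _]; apply: leq_trans Hh _; rewrite -Hs.
    by case: s sn {Hp Hs H1} => [//|y s] _ /=; rewrite leq_addr.
  rewrite -(big_mkord predT (fun j => if smallest_part s == j.+1 then (-1) ^+ j else 0)).
  transitivity (\sum_(0 <= j < N) (if (smallest_part s).-1 == j then (-1) ^+ j else 0 : int)).
    rewrite sum_ind; case: (smallest_part s) H1 H2 => [//|k] _ /= H2.
    by rewrite (ltn_trans H2 nN) exprS mulN1r exprS mulN1r opprK.
  by apply: eq_bigr => j _; case: (smallest_part s) H1 => [//|k] _ /=.
rewrite (eq_big_seq _ E) exchange_big /=; apply: eq_bigr => j _.
rewrite sum_if; congr (_ * _).
have -> : count (fun s => smallest_part s == j.+1) (partitions n) =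
          count (fun s => allge j.+1 s && ~~ allge j.+2 s) (partitions n).
  apply: eq_in_count => s; rewrite mem_partitions => /and3P [_ Hp /eqP Hs].
  have sn : s != [::] by apply/eqP => E0; rewrite E0 /= in Hs; rewrite -Hs in n1.
  by rewrite eqn_leq andbC -!sp_ge // -ltnNge.
rewrite count_X //; case: ifP => H; first by rewrite subzn.
by rewrite g_neg // subr_lt0 ltz_nat ltnNge H.
Qed.

Lemma sorted_gtn_uniq (s : seq nat) : sorted gtn s = uniq s && sorted geq s.
Proof.
transitivity (sorted ltn (rev s)); first by rewrite rev_sorted.
by rewrite ltn_sorted_uniq_leq rev_uniq rev_sorted.
Qed.

Lemma Sd_subs i K : (i <= K)%N ->
  Sd i = \sum_(t <- subs K | sumn t == i) (-1) ^+ `|rank t|%N.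
Proof.
move=> iK; rewrite /Sd (count_sign2 _ (fun s => uniq s) (fun s => `|rank s|%N)).
rewrite -(big_filter (partitions i)) -(big_filter (subs K)); apply: perm_big; apply: uniq_perm.
- by apply: filter_uniq; apply: uniq_partitions.
- by apply: filter_uniq; apply: uniq_subs.
move=> s; rewrite [s \in filter _ (partitions i)]mem_filter [s \in filter _ (subs K)]mem_filter.
rewrite mem_partitions mem_subs /is_partition sorted_gtn_uniq.
case: eqP => Hs; last by rewrite !andbF.
have -> : all (fun x => 0 < x <= K)%N s = all (fun x => 0 < x)%N s.
  apply: eq_in_all => x Hx; apply: andb_idr => _.
  by apply: leq_trans (mem_sumn Hx) _; rewrite Hs.
by case: (uniq s); case: (sorted geq s); case: (all _ s).
Qed.

Lemma rank_parity a b : odd `|a%:Z - b%:Z|%N = odd (a + b).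
Proof.
case: (leqP a b) => H.
  by rewrite distnEr // oddB // oddD addbC.
by rewrite distnEl ?(ltnW H) // oddB ?(ltnW H) // oddD.
Qed.

Lemma foldr_max_le m (T : seq nat) : all (fun x => x <= m)%N T -> (foldr maxn 0 T <= m)%N.
Proof. by elim: T => //= x T IH /andP [Hx /IH H]; rewrite geq_max Hx H. Qed.

Lemma sum_subs_split (h : seq nat -> int) k :
  \sum_(t <- subs k) h t = h [::] + \sum_(j < k) \sum_(T <- subs j) h (j.+1 :: T).
Proof.
elim: k => [|k IH]; first by rewrite /= big_cons big_nil big_ord0 !addr0.
by rewrite /= big_cat big_map IH big_ord_recr /= addrA.
Qed.

Lemma RHS_eq n N : (1 <= n)%N -> (n < N)%N ->
  \sum_(1 <= i < N) Sd i * pnum (n%:Z - i%:Z) =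
  \sum_(j < N) (-1) ^+ j * g j.+1 (n%:Z - j.+1%:Z).
Proof.
move=> n1 nN.
pose w (t : seq nat) : int := (-1) ^+ `|rank t|%N.
transitivity (\sum_(1 <= i < N) \sum_(t <- subs N)
                (if sumn t == i then w t * pnum (n%:Z - i%:Z) else 0)).
  apply: eq_big_nat => i /andP [_ iN]; rewrite (Sd_subs (ltnW iN)) big_mkcond mulr_suml.
  by apply: eq_bigr => t _; case: ifP; rewrite ?mul0r.
rewrite exchange_big /=.
pose h (t : seq nat) : int := if t is _ :: _ then w t * pnum (n%:Z - (sumn t)%:Z) else 0.
transitivity (\sum_(t <- subs N) h t).
  apply: eq_big_seq => t Ht.
  rewrite (sum_ind (fun i => w t * pnum (n%:Z - i%:Z)) (sumn t) 1 N).
  case: t Ht => [|x T] //= Ht.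
  move: Ht; rewrite mem_subs /= => /andP [_ /andP [/andP [x0 _] _]].
  rewrite (leq_trans x0 (leq_addr _ _)) /=; case: ifP => // H.
  rewrite pnum_neg ?mulr0 // subr_lt0 ltz_nat.
  by apply: leq_trans nN _; rewrite leqNgt H.
rewrite sum_subs_split /= add0r; apply: eq_bigr => j _.
rewrite -F_g /F mulr_sumr; apply: eq_big_seq => T HT.
rewrite /h /w /rank /largest_part /num_parts /=.
have -> : maxn j.+1 (foldr maxn 0 T) = j.+1.
  apply/maxn_idPl; apply: foldr_max_le; move: HT; rewrite mem_subs => /andP [_ H].
  by apply/allP => x /(allP H) /andP [_ /leqW].
rewrite -signr_odd rank_parity addSn addnS /= negbK signr_odd exprD -mulrA.
by rewrite PoszD opprD addrA.
Qed.

Unset Implicit Arguments.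
Theorem theorem4 (n : nat) (hn : (1 <= n)%N) (N : nat) (hN : (n < N)%N) :
  (P_O n)%:Z - (P_E n)%:Z = \sum_(1 <= i < N) Sd i * pnum (n%:Z - i%:Z).
Proof. by rewrite (LHS_eq hn hN) (RHS_eq hn hN). Qed.
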